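(* There exists $\gamma_0>0$ such that for every $\gamma\in(0,\gamma_0]$ there exists $n_0$ such that the following holds for every even integer $n\ge n_0$. Suppose $G$ is a graph on $n$ vertices with $\sigma(G)\ge n-\gamma n$. Then one of the following holds: (i) $G$ admits a perfect matching; (ii) $G$ contains a $2\gamma$-independent set of size at least $\frac n2$; (iii) $G$ has exactly two connected components $C_1$ and $C_2$, each of odd order, and moreover, if $|C_i|\le\frac{1-\gamma}{2}n$ for some $i\in\{1,2\}$, then $C_i$ is a clique.
   Context: All graphs are finite and simple. $\sigma(G):=\min\{d(x)+d(y): x\ne y,\ xy\notin E(G)\}$ ($+\infty$ if $G$ is complete). For an $n$-vertex graph $G$ and $\gamma>0$, a set $S\subseteq V(G)$ is $\gamma$-independent if $G[S]$ has at most $\gamma n^2$ edges. *)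

(* Defs.v *)
From HB Require Import structures.
From mathcomp Require Import all_boot all_order all_algebra.
From mathcomp Require Import reals.
Set Implicit Arguments. Unset Strict Implicit. Unset Printing Implicit Defensive.
Import Order.TTheory GRing.Theory Num.Theory.
Local Open Scope ring_scope.

Definition simple_graph (T : finType) (e : rel T) : Prop :=
  symmetric e /\ irreflexive e.

Definition deg (T : finType) (e : rel T) (x : T) : nat := #|[set y | e x y]|.

(* sigma(G) >= s  (vacuous if G is complete, since sigma = +oo) *)
Definition sigma_ge (R : realType) (T : finType) (e : rel T) (s : R) : Prop :=
  forall x y : T, x != y -> ~~ e x y -> s <= ((deg e x + deg e y)%N)%:R.

Definition edges_in (T : finType) (e : rel T) (S : {set T}) : nat :=
  #|[set E in powerset S | (#|E| == 2)%N &&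
      [forall x in E, forall y in E, (x != y) ==> e x y]]|.

Definition gamma_independent (R : realType) (T : finType) (e : rel T)
    (g : R) (S : {set T}) : Prop :=
  (edges_in e S)%:R <= g * (#|T| ^ 2)%:R.

Definition perfect_matching (T : finType) (e : rel T) (M : {set {set T}}) : Prop :=
  (forall E, E \in M -> exists x y, [/\ E = [set x; y], x != y & e x y]) /\
  trivIset M /\ cover M = [set: T].

Definition has_perfect_matching (T : finType) (e : rel T) : Prop :=
  exists M, perfect_matching e M.

Definition components (T : finType) (e : rel T) : {set {set T}} :=
  [set [set y | connect e x y] | x : T].

Definition is_clique (T : finType) (e : rel T) (C : {set T}) : Prop :=
  forall x y, x \in C -> y \in C -> x != y -> e x y.

(* Main.v *)
Require Import Defs.
From HB Require Import structures.
From mathcomp Require Import all_boot all_order all_algebra.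
From mathcomp Require Import reals.
From mathcomp Require Import zify lra.
Set Implicit Arguments. Unset Strict Implicit. Unset Printing Implicit Defensive.

Section Comb.
Variables (T : finType) (e : rel T).
Hypotheses (esy : symmetric e) (eirr : irreflexive e).

Definition Nb x := [set y | e x y].
Definition is2edge (E : {set T}) :=
  [exists x, exists y, (E == [set x; y]) && (x != y) && e x y].
Definition matchingb (M : {set {set T}}) :=
  [forall E in M, is2edge E] && trivIset M.
Definition maxM M := matchingb M /\ forall M', matchingb M' -> #|M'| <= #|M|.
Definition unm (M : {set {set T}}) x := x \notin cover M.

Lemma is2edgeP E :
  reflect (exists x y, [/\ E = [set x; y], x != y & e x y]) (is2edge E).
Proof.
apply: (iffP existsP) => [[x /existsP[y /andP[/andP[/eqP -> ?] ?]]]|[x [y [-> ? ?]]]].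
  by exists x, y.
by exists x; apply/existsP; exists y; rewrite eqxx /=; apply/andP.
Qed.

Lemma maxM_exists : exists M, maxM M.
Proof.
have m0 : matchingb set0.
  rewrite /matchingb; apply/andP; split.
    by apply/forall_inP => E; rewrite inE.
  by apply/trivIsetP => A B; rewrite inE.
case: (@arg_maxnP _ set0 matchingb (fun M => #|M|) m0) => M mM Mmax.
by exists M; split => // M' /Mmax.
Qed.

Lemma m_edge M E : matchingb M -> E \in M ->
  exists x y, [/\ E = [set x; y], x != y & e x y].
Proof. by case/andP => /forall_inP H _ /H /is2edgeP. Qed.

Lemma m_triv M : matchingb M -> trivIset M.
Proof. by case/andP. Qed.

Lemma m_set0 M : matchingb M -> set0 \notin M.
Proof.
move=> mM; apply/negP => /(m_edge mM) [x [y [/setP /(_ x)]]].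
by rewrite !inE eqxx.
Qed.

Lemma m_uniq M E1 E2 x : matchingb M -> E1 \in M -> E2 \in M ->
  x \in E1 -> x \in E2 -> E1 = E2.
Proof.
move=> mM H1 H2 x1 x2; apply/eqP; apply: contraT => ne.
have /trivIsetP tri := m_triv mM; have := tri _ _ H1 H2 ne.
by move/disjointFr => /(_ x x1); rewrite x2.
Qed.

Lemma m_cover_card M : matchingb M -> #|cover M| = (#|M| * 2)%N.
Proof.
move=> mM; apply: card_uniform_partition; last first.
  by rewrite /partition eqxx m_triv // m_set0.
by move=> E /(m_edge mM) [x [y [-> xy _]]]; rewrite cards2 xy.
Qed.

Lemma in_cover (M : {set {set T}}) x E : E \in M -> x \in E -> x \in cover M.
Proof. by move=> HE xE; apply/bigcupP; exists E. Qed.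

Lemma coverP' (M : {set {set T}}) x : x \in cover M -> exists2 E, E \in M & x \in E.
Proof. by case/bigcupP => E; exists E. Qed.

(* adding an edge between two unmatched vertices *)
Lemma add_contra M x y : maxM M -> unm M x -> unm M y -> x != y -> e x y -> False.
Proof.
move=> [mM Mmax] ux uy xy exy.
have dis : {in M, forall B : {set T}, [disjoint [set x; y] & B]}.
  move=> B HB; rewrite disjoint_sym; apply/pred0P => z /=.
  apply/negP => /andP [zB]; rewrite !inE => /orP [] /eqP ?; subst z.
    by move: ux; rewrite /unm (in_cover HB zB).
  by move: uy; rewrite /unm (in_cover HB zB).
have [tri nin] := trivIsetU1 dis (m_triv mM) (m_set0 mM).
have mM' : matchingb ([set x; y] |: M).
  apply/andP; split => //; apply/forall_inP => E /setU1P [->|HE].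
    by apply/is2edgeP; exists x, y.
  by apply/is2edgeP; apply: m_edge HE.
have := Mmax _ mM'; rewrite cardsU1 nin /=.
by rewrite add1n ltnn.
Qed.


Lemma swap M u a b : maxM M -> unm M u -> [set a; b] \in M -> a != b -> e u a ->
  exists M', [/\ maxM M', unm M' b, (forall w, unm M w -> w != u -> unm M' w)
             & (forall E, E \in M -> E != [set a; b] -> E \in M')].
Proof.
move=> [mM Mmax] uu abM ab eua.
have aC : a \in cover M by apply: in_cover abM _; rewrite !inE eqxx.
have bC : b \in cover M by apply: in_cover abM _; rewrite !inE eqxx orbT.
have ua : u != a by apply: contraNneq uu => ->.
have ub : u != b by apply: contraNneq uu => ->.
set M0 := M :\ [set a; b].
have dis : {in M0, forall B : {set T}, [disjoint [set u; a] & B]}.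
  move=> B; rewrite !inE => /andP [nB HB]; rewrite disjoint_sym; apply/pred0P => z /=.
  apply/negP => /andP [zB]; rewrite !inE => /orP [] /eqP ?; subst z.
    by move: uu; rewrite /unm (in_cover HB zB).
  have := m_uniq mM HB abM zB; rewrite !inE eqxx => /(_ isT) eB.
  by rewrite eB eqxx in nB.
have tri0 : trivIset M0 by apply: trivIsetS (m_triv mM); apply: subsetDl.
have n0 : set0 \notin M0 by apply: contra (m_set0 mM); rewrite inE => /andP [].
have [tri nin] := trivIsetU1 dis tri0 n0.
have mM' : matchingb ([set u; a] |: M0).
  apply/andP; split => //; apply/forall_inP => E /setU1P [->|].
    by apply/is2edgeP; exists u, a.
  by rewrite inE => /andP [_ HE]; apply/is2edgeP; apply: m_edge HE.
have cardM' : #|[set u; a] |: M0| = #|M|.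
  by rewrite cardsU1 nin (cardsD1 [set a; b] M) abM.
exists ([set u; a] |: M0); split.
- by split => // M'' /Mmax; rewrite cardM'.
- apply/negP => /bigcupP [E /setU1P [->|]].
    by rewrite !inE => /orP [] /eqP bx; [move: ub; rewrite bx eqxx | move: ab; rewrite bx eqxx].
  rewrite !inE => /andP [nE HE] bE.
  have := m_uniq mM HE abM bE; rewrite !inE eqxx orbT => /(_ isT) eB.
  by rewrite eB eqxx in nE.
- move=> w uw wu; apply/negP => /bigcupP [E /setU1P [->|]].
    rewrite !inE => /orP [] /eqP wx; first by rewrite wx eqxx in wu.
    by move: uw; rewrite /unm wx aC.
  rewrite !inE => /andP [_ HE] wE.
  by move: uw; rewrite /unm (in_cover HE wE).
- by move=> E HE nE; apply/setU1P; right; rewrite !inE nE HE.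
Qed.


Lemma path3 M x y a b : maxM M -> unm M x -> unm M y -> x != y ->
  [set a; b] \in M -> a != b -> e x a -> e b y -> False.
Proof.
move=> mx ux uy xy abM ab exa eby.
have [M' [mx' ub' H _]] := swap mx ux abM ab exa.
have uy' : unm M' y by apply: H => //; rewrite eq_sym.
apply: (add_contra mx' ub' uy' _ eby); last first.
by apply/eqP => eb; move: uy; rewrite /unm -eb (in_cover abM) // !inE eqxx orbT.
Qed.

Lemma path5 M x y a b c d : maxM M -> unm M x -> unm M y -> x != y ->
  [set a; b] \in M -> [set c; d] \in M -> [set a; b] != [set c; d] ->
  a != b -> c != d -> e x a -> e b d -> e c y -> False.
Proof.
move=> mx ux uy xy abM cdM ne ab cd exa ebd ecy.
have [M' [mx' ub' H H2]] := swap mx ux abM ab exa.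
have uy' : unm M' y by apply: H => //; rewrite eq_sym.
have cdM' : [set c; d] \in M' by apply: H2 => //; rewrite eq_sym.
have yb : y != b.
  by apply/eqP => eb; move: uy; rewrite /unm eb (in_cover abM) // !inE eqxx orbT.
by apply: (path3 mx' uy' ub' yb cdM' cd); rewrite esy.
Qed.

Lemma reach M u x : maxM M -> unm M u ->
  (x = u \/ exists a, [/\ [set a; x] \in M, a != x & e u a]) ->
  exists M', [/\ maxM M', unm M' x, (forall w, unm M w -> w != u -> unm M' w)
             & (forall E, E \in M -> x \notin E -> E \in M')].
Proof.
move=> mx uu [->|[a [axM ax eua]]].
  by exists M; split.
have [M' [mx' ux' H H2]] := swap mx uu axM ax eua.
exists M'; split => // E HE xE; apply: H2 => //.
by apply: contraNneq xE => ->; rewrite !inE eqxx orbT.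
Qed.

Lemma card_Isum (Z A : {set T}) : #|Z :&: A| = \sum_(x in A) (x \in Z : nat).
Proof.
rewrite -sum1_card big_mkcond [RHS]big_mkcond /=; apply: eq_bigr => x _.
by rewrite !inE; case: (x \in A); case: (x \in Z).
Qed.

Lemma card2I (Z : {set T}) a b : a != b ->
  #|Z :&: [set a; b]| = ((a \in Z) + (b \in Z))%N.
Proof.
by move=> ab; rewrite card_Isum big_setU1 /= ?big_set1 // ?inE.
Qed.

Lemma card_cond (M : {set {set T}}) (P : pred {set T}) :
  #|[set E in M | P E]| = \sum_(E in M) (P E : nat).
Proof.
rewrite -sum1_card big_mkcond [RHS]big_mkcond /=; apply: eq_bigr => E _.
by rewrite !inE; case: (E \in M); case: (P E).
Qed.

Lemma sum_cover M (Z : {set T}) : matchingb M ->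
  #|Z :&: cover M| = \sum_(E in M) #|Z :&: E|.
Proof.
move=> mM; rewrite card_Isum (big_trivIset M (m_triv mM)) /=.
by apply: eq_bigr => E _; rewrite card_Isum.
Qed.

Lemma deg_sum M x : matchingb M -> Nb x \subset cover M ->
  deg e x = \sum_(E in M) #|Nb x :&: E|.
Proof.
by move=> mM sub; rewrite /deg -/(Nb x) -sum_cover // (setIidPl sub).
Qed.

Lemma unm_nb M x : maxM M -> unm M x -> Nb x \subset cover M.
Proof.
move=> mx ux; apply/subsetP => y; rewrite inE => exy; apply: contraT => uy.
have xy : x != y by apply: contraTneq exy => ->; rewrite eirr.
by case: (add_contra mx ux uy xy exy).
Qed.

Lemma edge_of M (M' : {set {set T}}) x : matchingb M -> M' \subset M ->
  x \in cover M' -> exists y, [/\ [set x; y] \in M', x != y & e x y].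
Proof.
move=> mM sub /bigcupP [E HE xE].
have [a [b [Eab ab eab]]] := m_edge mM (subsetP sub _ HE).
move: xE; rewrite Eab !inE => /orP [] /eqP ->.
  by exists b; rewrite -Eab.
by exists a; rewrite setUC -Eab eq_sym esy.
Qed.


Lemma cardU_le (A B : {set T}) : (#|A :|: B| <= #|A| + #|B|)%N.
Proof. by rewrite -cardsUI leq_addr. Qed.

Lemma edges_bound (S W1 W2 Y : {set T}) :
  (forall x y, x \in S -> y \in S -> e x y -> (x \in W1 :|: W2) || (y \in W1 :|: W2)) ->
  (forall x y, x \in W1 -> y \in S -> e x y -> y \in Y) ->
  (edges_in e S <= #|W1| * #|Y| + #|W2| * #|T|)%N.
Proof.
move=> hI hY.
set P := setX W1 Y :|: setX W2 [set: T].
apply: (@leq_trans #|P|); last first.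
  apply: (@leq_trans (#|setX W1 Y| + #|setX W2 [set: T]|)); first by rewrite -cardsUI leq_addr.
  by rewrite !cardsX cardsT.
apply: (@leq_trans #|[set [set xy.1; xy.2] | xy in P]|); last exact: leq_imset_card.
apply: subset_leq_card; apply/subsetP => E; rewrite inE => /andP [].
rewrite powersetE => sES /andP [/cards2P [x [y [xy Exy]]] /forall_inP H].
have xE : x \in E by rewrite Exy !inE eqxx.
have yE : y \in E by rewrite Exy !inE eqxx orbT.
have exy : e x y by move: (H x xE) => /forall_inP /(_ y yE); rewrite xy.
have xS := subsetP sES _ xE; have yS := subsetP sES _ yE.
case/orP: (hI _ _ xS yS exy) => /setUP [] hW.
- by apply/imsetP; exists (x, y); rewrite // !inE /= hW (hY _ _ hW yS exy).
- by apply/imsetP; exists (x, y); rewrite // !inE /= hW orbT.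
- apply/imsetP; exists (y, x); last by rewrite Exy setUC.
  by rewrite !inE /= hW (hY _ _ hW xS); rewrite // esy.
- by apply/imsetP; exists (y, x); rewrite ?Exy 1?setUC // !inE /= hW orbT.
Qed.


Lemma m_neq (M : {set {set T}}) a b : matchingb M -> [set a; b] \in M -> a != b.
Proof.
move=> mM /(m_edge mM) [x [y [E xy _]]].
by move: (cards2 a b) (cards2 x y); rewrite E xy => ->; case: (a != b).
Qed.

Lemma m_sub (M M' : {set {set T}}) : matchingb M -> M' \subset M -> matchingb M'.
Proof.
move=> mM sub; apply/andP; split; last exact: trivIsetS sub (m_triv mM).
apply/forall_inP => E /(subsetP sub) HE; apply/is2edgeP; exact: m_edge mM HE.
Qed.

Section Pair.
Variables (M : {set {set T}}) (u v : T).
Hypotheses (mx : maxM M) (uu : unm M u) (uv : unm M v) (nuv : u != v).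

Let mM : matchingb M := proj1 mx.

Definition su (E : {set T}) := E \subset Nb u.
Definition sv (E : {set T}) := E \subset Nb v.
Definition sh (E : {set T}) := [exists a in E, e u a && e v a].
Definition cnt_p := #|[set E in M | su E || sv E]|.
Definition cnt_s := #|[set E in M | sh E]|.
Definition cnt_d := #|[set E in M | ~~ (su E || sv E) && ~~ sh E]|.

Lemma su2 a b : su [set a; b] = e u a && e u b.
Proof. by rewrite /su subUset !sub1set !inE. Qed.
Lemma sv2 a b : sv [set a; b] = e v a && e v b.
Proof. by rewrite /sv subUset !sub1set !inE. Qed.
Lemma sh2 a b : sh [set a; b] = (e u a && e v a) || (e u b && e v b).
Proof.
apply/existsP/orP => [[x /andP [] ]|[H|H]].
  by rewrite !inE => /orP [] /eqP -> H; [left|right].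
  by exists a; rewrite !inE eqxx.
by exists b; rewrite !inE eqxx orbT.
Qed.

Lemma edgeM E : E \in M -> exists a b, [/\ E = [set a; b], a != b, e a b,
   ~~ (e u a && e v b) & ~~ (e u b && e v a)].
Proof.
move=> HE; have [a [b [Eab ab eab]]] := m_edge mM HE.
exists a, b; split => //.
  apply/negP => /andP [h1 h2].
  have abM : [set a; b] \in M by rewrite -Eab.
  by apply: (path3 mx uu uv nuv abM ab h1); rewrite esy.
apply/negP => /andP [h1 h2].
have baM : [set b; a] \in M by rewrite setUC -Eab.
have ba : b != a by rewrite eq_sym.
by apply: (path3 mx uu uv nuv baM ba h1); rewrite esy.
Qed.

Lemma D1 : (deg e u + deg e v + cnt_d <= #|M| * 2)%N.
Proof.
rewrite (deg_sum mM (unm_nb mx uu)) (deg_sum mM (unm_nb mx uv)) /cnt_d card_cond.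
rewrite -!big_split /= -sum_nat_const; apply: leq_sum => E HE.
have [a [b [-> ab eab nc1 nc2]]] := edgeM HE.
rewrite !card2I // su2 sv2 sh2 !inE.
by move: nc1 nc2; case: (e u a); case: (e u b); case: (e v a); case: (e v b).
Qed.

Lemma D2 : (cnt_s + cnt_p + cnt_d <= #|M|)%N.
Proof.
rewrite /cnt_d /cnt_p /cnt_s !card_cond -!big_split /= -sum1_card; apply: leq_sum => E HE.
have [a [b [-> ab eab nc1 nc2]]] := edgeM HE.
rewrite su2 sv2 sh2.
by move: nc1 nc2; case: (e u a); case: (e u b); case: (e v a); case: (e v b).
Qed.


Lemma lowdeg z : Nb z \subset cover M ->
  (forall c d, [set c; d] \in M -> c != d -> e u c -> e u d -> ~~ e z c) ->
  (forall c d, [set c; d] \in M -> c != d -> e v c -> e v d -> ~~ e z c) ->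
  (forall c d, [set c; d] \in M -> c != d -> e u c -> e v c -> ~~ e z d) ->
  (deg e z <= cnt_s + 2 * cnt_d)%N.
Proof.
move=> sub h1 h2 h3.
rewrite (deg_sum mM sub) /cnt_s /cnt_d !card_cond big_distrr -big_split /=.
apply: leq_sum => E HE.
have [a [b [Eab ab eab nc1 nc2]]] := edgeM HE.
have abM : [set a; b] \in M by rewrite -Eab.
have baM : [set b; a] \in M by rewrite setUC -Eab.
have ba : b != a by rewrite eq_sym.
have := h1 _ _ abM ab; have := h1 _ _ baM ba.
have := h2 _ _ abM ab; have := h2 _ _ baM ba.
have := h3 _ _ abM ab; have := h3 _ _ baM ba.
rewrite Eab !card2I // su2 sv2 sh2 !inE.
move: nc1 nc2; case: (e u a); case: (e u b); case: (e v a); case: (e v b);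
  case: (e z a); case: (e z b) => //= H1 H2 H3 H4 H5 H6 H7 H8;
  repeat match goal with H : is_true true -> _ |- _ => specialize (H isT) end;
  repeat match goal with H : is_true true -> _ |- _ => specialize (H isT) end;
  by [].
Qed.


Definition Bsh := [set b | [exists a, ([set a; b] \in M) && e u a && e v a]].
Definition Msp := [set E in M | su E || sv E].
Definition Mdf := [set E in M | ~~ (su E || sv E) && ~~ sh E].

Lemma shend a b : [set a; b] \in M -> e u a -> e v a -> ~~ e b u && ~~ e b v.
Proof.
move=> abM eua eva; have ab := m_neq mM abM.
apply/andP; split; apply/negP => h.
  by apply: (path3 mx uv uu _ abM ab eva h); rewrite eq_sym.
by apply: (path3 mx uu uv nuv abM ab eua h).
Qed.

Lemma BshP b : b \in Bsh -> exists a, [/\ [set a; b] \in M, a != b, e u a, e v a &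
  ~~ e b u && ~~ e b v].
Proof.
rewrite inE => /existsP [a /andP [/andP [abM eua] eva]].
exists a; split => //; first exact: m_neq mM abM.
exact: (shend abM eua eva).
Qed.

Lemma Msp_sub : Msp \subset M.
Proof. by apply/subsetP => E; rewrite inE => /andP []. Qed.
Lemma Mdf_sub : Mdf \subset M.
Proof. by apply/subsetP => E; rewrite inE => /andP []. Qed.

Lemma MspP x : x \in cover Msp -> exists y, [/\ [set x; y] \in M, x != y &
   (e u x && e u y) || (e v x && e v y)].
Proof.
move=> xC; have [y [xyM xy _]] := edge_of mM Msp_sub xC.
by exists y; move: xyM; rewrite inE su2 sv2 => /andP [? ?]; split.
Qed.



Lemma UB w b : unm M w -> b \in Bsh -> ~~ e w b.
Proof.
move=> uw /BshP [a [abM ab eua eva /andP [nbu nbv]]]; apply/negP => ewb.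
case: (eqVneq w u) => [wu|wu].
  by move: nbu; rewrite -wu esy ewb.
by apply: (path3 mx uu uw (_ : u != w) abM ab eua); rewrite 1?esy // eq_sym.
Qed.

Lemma BB b b' : b \in Bsh -> b' \in Bsh -> ~~ e b b'.
Proof.
move=> /BshP [a [abM ab eua eva /andP [nbu nbv]]].
move=> /BshP [a' [abM' ab' eua' eva' /andP [nbu' nbv']]]; apply/negP => ebb.
case: (eqVneq [set a; b] [set a'; b']) => [eq|ne].
  have : b' \in [set a; b] by rewrite eq !inE eqxx orbT.
  rewrite !inE => /orP [] /eqP eb'; last by move: ebb; rewrite eb' eirr.
  have : b \in [set a'; b'] by rewrite -eq !inE eqxx orbT.
  rewrite !inE => /orP [] /eqP eb; last by move: ebb; rewrite eb eirr.
  by move: nbu; rewrite eb esy eua'.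
by apply: (path5 mx uu uv nuv abM abM' ne ab ab' eua ebb); rewrite esy.
Qed.

Lemma SpU x w : x \in cover Msp -> unm M w -> w != u -> w != v -> ~~ e x w.
Proof.
move=> /MspP [x' [xxM xx' H]] uw wu wv; apply/negP => exw.
have xxM' : [set x'; x] \in M by rewrite setUC.
have x'x : x' != x by rewrite eq_sym.
case/orP: H => /andP [h1 h2].
  by apply: (path3 mx uu uw (_ : u != w) xxM' x'x h2 exw); rewrite eq_sym.
by apply: (path3 mx uv uw (_ : v != w) xxM' x'x h2 exw); rewrite eq_sym.
Qed.

Lemma SpB x b : x \in cover Msp -> b \in Bsh -> ~~ e x b.
Proof.
move=> /MspP [x' [xxM xx' H]] /BshP [a [abM ab eua eva /andP [nbu nbv]]].
apply/negP => exb.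
have xxM' : [set x'; x] \in M by rewrite setUC.
have x'x : x' != x by rewrite eq_sym.
have ne : [set a; b] != [set x'; x].
  apply/eqP => eq; have : b \in [set x'; x] by rewrite -eq !inE eqxx orbT.
  rewrite !inE => /orP [] /eqP eb; move: nbu nbv; rewrite eb (esy _ u) (esy _ v);
    by case/orP: H => /andP [h1 h2]; rewrite ?h1 ?h2.
have ebx : e b x by rewrite esy.
case/orP: H => /andP [h1 h2].
  by apply: (path5 mx uv uu (_ : v != u) abM xxM' ne ab x'x eva ebx); rewrite 1?esy // eq_sym.
by apply: (path5 mx uu uv nuv abM xxM' ne ab x'x eua ebx); rewrite esy.
Qed.


Definition Drep := [set odflt u [pick y in E] | E : {set T} in Mdf].
Definition Sset := ~: cover M :|: Bsh :|: cover Msp :|: Drep.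

Lemma case1 : exists S : {set T}, (#|T| <= 2 * #|S|)%N /\
  (edges_in e S <= (2 * cnt_p) * (2 * cnt_p + cnt_d + 2) + cnt_d * #|T|)%N.
Proof.
exists Sset; split.
  have eU : Sset :\: cover M = ~: cover M.
    by apply/setP => x; rewrite !inE; case xC: (x \in cover M).
  have hM : (#|M| <= #|Sset :&: cover M|)%N.
    rewrite sum_cover // -sum1_card; apply: leq_sum => E HE.
    rewrite card_gt0; apply/set0Pn.
    have [a [b [Eab ab eab nc1 nc2]]] := edgeM HE.
    have aE : a \in E by rewrite Eab !inE eqxx.
    have bE : b \in E by rewrite Eab !inE eqxx orbT.
    case spE: (su E || sv E).
      exists a; rewrite !inE aE andbT; apply/orP; left; apply/orP; right.
      by apply: (in_cover _ aE); rewrite inE HE spE.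
    case shE: (sh E).
      have shE' : sh [set a; b] by rewrite -Eab shE.
      move: shE'; rewrite sh2 => /orP [] /andP [h1 h2].
        exists b; rewrite !inE bE andbT; apply/orP; left; apply/orP; left.
        apply/orP; right; apply/existsP; exists a.
        by rewrite -Eab HE h1 h2.
      exists a; rewrite !inE aE andbT; apply/orP; left; apply/orP; left.
      apply/orP; right; apply/existsP; exists b.
      by rewrite setUC -Eab HE h1 h2.
    have [y yE Hp] : exists2 y, y \in E & [pick y in E] = Some y.
      by case: pickP => [y yE|h]; [exists y | move: (h a); rewrite aE].
    exists y; rewrite !inE yE andbT; apply/orP; right; apply/imsetP; exists E.
      by rewrite inE HE spE shE.
    by rewrite Hp.
  have := cardsID (cover M) Sset; rewrite eU.
  have := cardsC (cover M); rewrite (m_cover_card mM).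
  lia.
apply: leq_trans (edges_bound (W1 := cover Msp) (W2 := Drep)
   (Y := cover Msp :|: Drep :|: [set u; v]) _ _) _.
- move=> x y xS yS exy.
  case xW: (x \in cover Msp :|: Drep) => //; case yW: (y \in cover Msp :|: Drep) => //.
  exfalso.
  have SUB z : z \in Sset -> z \in cover Msp :|: Drep = false ->
      (z \notin cover M) || (z \in Bsh).
    rewrite /Sset !in_setU !in_setC.
    by case: (z \in cover Msp); case: (z \in Drep); rewrite ?orbT ?orbF.
  have xy : x != y by apply: contraTneq exy => ->; rewrite eirr.
  case/orP: (SUB _ xS xW) => [xU|xB]; case/orP: (SUB _ yS yW) => [yU|yB].
  + exact: (add_contra mx xU yU xy exy).
  + by move: (UB xU yB); rewrite exy.
  + by move: (UB yU xB); rewrite esy exy.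
  + by move: (BB xB yB); rewrite exy.
- move=> x y xW yS exy.
  case yW: (y \in cover Msp :|: Drep); first by rewrite in_setU yW.
  have : (y \notin cover M) || (y \in Bsh).
    move: yS yW; rewrite /Sset !in_setU !in_setC.
    by case: (y \in cover Msp); case: (y \in Drep); rewrite ?orbT ?orbF.
  case/orP => [yU|yB].
    case: (eqVneq y u) => [->|yu]; first by rewrite !inE eqxx orbT.
    case: (eqVneq y v) => [->|yv]; first by rewrite !inE eqxx !orbT.
    by move: (SpU xW yU yu yv); rewrite exy.
  by move: (SpB xW yB); rewrite exy.
have c1 : #|cover Msp| = (2 * cnt_p)%N.
  by rewrite (m_cover_card (m_sub mM Msp_sub)) mulnC.
have c2 : (#|Drep| <= cnt_d)%N by apply: leq_imset_card.
have c3 : (#|cover Msp :|: Drep :|: [set u; v]| <= 2 * cnt_p + cnt_d + 2)%N.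
  apply: leq_trans (cardU_le _ _) _; rewrite cards2 -c1.
  by have := cardU_le (cover Msp) Drep; case: (u != v); lia.
rewrite c1; apply: leq_add; apply: leq_mul => //.
Qed.



Section Case2.
Hypothesis HL : forall z, z != u -> z != v -> ~~ e z u -> ~~ e z v ->
  (deg e z <= cnt_s + 2 * cnt_d)%N -> False.

Lemma inC E z : E \in M -> z \in E -> z \in cover M.
Proof. by move=> HE zE; apply: in_cover HE zE. Qed.

Lemma neq_unm z w : z \in cover M -> unm M w -> z != w.
Proof. by move=> zC uw; apply: contraNneq uw => <-. Qed.

Lemma shared_contra a b : [set a; b] \in M -> e u a -> e v a -> False.
Proof.
move=> abM eua eva; have ab := m_neq mM abM.
have /andP [nbu nbv] := shend abM eua eva.
have bC : b \in cover M by apply: inC abM _; rewrite !inE eqxx orbT.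
apply: (HL (neq_unm bC uu) (neq_unm bC uv) nbu nbv).
apply: lowdeg.
- apply/subsetP => y; rewrite inE => eby; apply: contraT => uy.
  case: (eqVneq y u) => [yu|yu]; first by move: nbu; rewrite -yu eby.
  case: (eqVneq y v) => [yv|yv]; first by move: nbv; rewrite -yv eby.
  by case: (path3 mx uu uy (_ : u != y) abM ab eua eby); rewrite eq_sym.
- move=> c d cdM cd euc eud; apply/negP => ebc.
  have dcM : [set d; c] \in M by rewrite setUC.
  have ne : [set a; b] != [set d; c].
    apply/eqP => eq; have : b \in [set d; c] by rewrite -eq !inE eqxx orbT.
    by rewrite !inE => /orP [] /eqP eb; move: nbu; rewrite eb esy ?euc ?eud.
  by apply: (path5 mx uv uu (_ : v != u) abM dcM ne ab (_ : d != c) eva ebc);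
    rewrite 1?eq_sym // esy.
- move=> c d cdM cd evc evd; apply/negP => ebc.
  have dcM : [set d; c] \in M by rewrite setUC.
  have ne : [set a; b] != [set d; c].
    apply/eqP => eq; have : b \in [set d; c] by rewrite -eq !inE eqxx orbT.
    by rewrite !inE => /orP [] /eqP eb; move: nbv; rewrite eb esy ?evc ?evd.
  by apply: (path5 mx uu uv nuv abM dcM ne ab (_ : d != c) eua ebc);
    rewrite 1?eq_sym // esy.
- move=> c d cdM cd euc evc; apply/negP => ebd.
  case: (eqVneq [set a; b] [set c; d]) => [eq|ne].
    have : d \in [set a; b] by rewrite eq !inE eqxx orbT.
    rewrite !inE => /orP [] /eqP ed; last by move: ebd; rewrite ed eirr.
    have : c \in [set a; b] by rewrite eq !inE eqxx.
    rewrite !inE => /orP [] /eqP ec; first by move: cd; rewrite ec ed eqxx.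
    by move: nbu; rewrite -ec esy euc.
  by apply: (path5 mx uu uv nuv abM cdM ne ab cd eua ebd); rewrite esy.
Qed.

Lemma noSh E : E \in M -> ~~ sh E.
Proof.
move=> HE; have [a [b [Eab ab _ _ _]]] := edgeM HE.
rewrite Eab sh2; apply/negP => /orP [] /andP [h1 h2].
  by apply: (shared_contra (_ : [set a; b] \in M) h1 h2); rewrite -Eab.
by apply: (shared_contra (_ : [set b; a] \in M) h1 h2); rewrite setUC -Eab.
Qed.

Lemma onlyUV w : unm M w -> (w == u) || (w == v).
Proof.
move=> uw; apply: contraT; rewrite negb_or => /andP [wu wv].
have nwu : ~~ e w u.
  by apply/negP => h; apply: (add_contra mx uw uu wu h).
have nwv : ~~ e w v.
  by apply/negP => h; apply: (add_contra mx uw uv wv h).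
exfalso; apply: (HL wu wv nwu nwv); apply: lowdeg.
- exact: unm_nb.
- move=> c d cdM cd euc eud; apply/negP => ewc.
  have dcM : [set d; c] \in M by rewrite setUC.
  by apply: (path3 mx uu uw (_ : u != w) dcM (_ : d != c) eud); rewrite 1?eq_sym // esy.
- move=> c d cdM cd evc evd; apply/negP => ewc.
  have dcM : [set d; c] \in M by rewrite setUC.
  by apply: (path3 mx uv uw (_ : v != w) dcM (_ : d != c) evd); rewrite 1?eq_sym // esy.
- move=> c d cdM cd euc evc; apply/negP => ewd.
  by apply: (path3 mx uu uw (_ : u != w) cdM cd euc); rewrite 1?eq_sym // esy.
Qed.


Definition Msu := [set E in M | su E].
Definition Msv := [set E in M | sv E].
Definition X1 := u |: cover Msu.
Definition Y1 := v |: cover Msv.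

Lemma Msu_sub : Msu \subset M.
Proof. by apply/subsetP => E; rewrite inE => /andP []. Qed.
Lemma Msv_sub : Msv \subset M.
Proof. by apply/subsetP => E; rewrite inE => /andP []. Qed.

Lemma su_sv E : E \in M -> su E -> sv E -> False.
Proof.
move=> HE; have [a [b [-> ab _ nc1 _]]] := edgeM HE.
by rewrite su2 sv2 => /andP [h1 _] /andP [_ h2]; move: nc1; rewrite h1 h2.
Qed.

Lemma cover_sub (M' : {set {set T}}) z : M' \subset M -> z \in cover M' -> z \in cover M.
Proof.
by move=> sub /bigcupP [E HE zE]; apply: (in_cover (subsetP sub _ HE) zE).
Qed.

Lemma X1_edge x F : x \in X1 -> F \in M -> x \in F -> su F.
Proof.
move=> + HF xF; rewrite /X1 in_setU1 => /orP [/eqP ex|].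
  by move: uu; rewrite /unm -ex (in_cover HF xF).
move=> /bigcupP [E HE xE]; move: HE; rewrite inE => /andP [HE' suE].
by rewrite -(m_uniq mM HE' HF xE xF).
Qed.

Lemma Y1_edge y F : y \in Y1 -> F \in M -> y \in F -> sv F.
Proof.
move=> + HF yF; rewrite /Y1 in_setU1 => /orP [/eqP ey|].
  by move: uv; rewrite /unm -ey (in_cover HF yF).
move=> /bigcupP [E HE yE]; move: HE; rewrite inE => /andP [HE' svE].
by rewrite -(m_uniq mM HE' HF yE yF).
Qed.

Lemma X1Y1 x : x \in X1 -> x \in Y1 -> False.
Proof.
move=> xX xY; case/setU1P: (xX) => [ex|xC].
  case/setU1P: xY => [exv|xC']; first by move: nuv; rewrite -ex exv eqxx.
  by move: uu; rewrite /unm -ex (cover_sub Msv_sub xC').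
case/bigcupP: xC => E HE xE; have HE' := subsetP Msu_sub _ HE.
exact: (su_sv HE' (X1_edge xX HE' xE) (Y1_edge xY HE' xE)).
Qed.

Lemma X1P x : x \in X1 -> x = u \/ exists a, [/\ [set a; x] \in M, a != x & e u a].
Proof.
rewrite /X1 in_setU1 => /orP [/eqP ->|xC]; first by left.
right; have [y [xyM xy _]] := edge_of mM Msu_sub xC.
move: xyM; rewrite inE su2 => /andP [xyM /andP [_ euy]].
by exists y; rewrite setUC eq_sym.
Qed.

Lemma Y1P y : y \in Y1 -> y = v \/ exists a, [/\ [set a; y] \in M, a != y & e v a].
Proof.
rewrite /Y1 in_setU1 => /orP [/eqP ->|yC]; first by left.
right; have [x [xyM xy _]] := edge_of mM Msv_sub yC.
move: xyM; rewrite inE sv2 => /andP [xyM /andP [_ evx]].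
by exists x; rewrite setUC eq_sym.
Qed.

Lemma uX1 : u \in X1. Proof. by rewrite /X1 in_setU1 eqxx. Qed.
Lemma vY1 : v \in Y1. Proof. by rewrite /Y1 in_setU1 eqxx. Qed.

Lemma reach2 x y : x \in X1 -> y \in Y1 -> exists M2, [/\ maxM M2, unm M2 x, unm M2 y &
  forall F, F \in M -> x \notin F -> y \notin F -> F \in M2].
Proof.
move=> xX yY.
have [M1 [mx1 ux1 H1 H1']] := reach mx uu (X1P xX).
have uv1 : unm M1 v by apply: H1; rewrite // eq_sym.
have hy : y = v \/ exists a, [/\ [set a; y] \in M1, a != y & e v a].
  case: (Y1P yY) => [->|[a [ayM ay eva]]]; [by left | right; exists a; split => //].
  apply: H1' => //; apply/negP => xF.
  have yF : y \in [set a; y] by rewrite !inE eqxx orbT.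
  exact: (su_sv ayM (X1_edge xX ayM xF) (Y1_edge yY ayM yF)).
have [M2 [mx2 uy2 H2 H2']] := reach mx1 uv1 hy.
exists M2; split => //.
  apply: H2 => //; apply/eqP => exv; apply: (X1Y1 xX); rewrite exv; exact: vY1.
by move=> F HF xF yF; apply: H2' => //; apply: H1'.
Qed.

Lemma XYne x y : x \in X1 -> y \in Y1 -> x != y.
Proof. by move=> xX yY; apply/eqP => exy; apply: (X1Y1 xX); rewrite exy. Qed.

Lemma XY_noedge x y : x \in X1 -> y \in Y1 -> ~~ e x y.
Proof.
move=> xX yY; apply/negP => exy.
have [M2 [mx2 ux2 uy2 _]] := reach2 xX yY.
exact: (add_contra mx2 ux2 uy2 (XYne xX yY) exy).
Qed.

Lemma df_notX x F : x \in X1 -> F \in Mdf -> x \notin F.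
Proof.
move=> xX; rewrite inE => /andP [HF /andP [H _]]; apply/negP => xF.
by move: H; rewrite (X1_edge xX HF xF).
Qed.

Lemma df_notY y F : y \in Y1 -> F \in Mdf -> y \notin F.
Proof.
move=> yY; rewrite inE => /andP [HF /andP [H _]]; apply/negP => yF.
by move: H; rewrite (Y1_edge yY HF yF) orbT.
Qed.

Lemma df_path3 x y a b : x \in X1 -> y \in Y1 -> [set a; b] \in Mdf ->
  e x a -> e b y -> False.
Proof.
move=> xX yY abD exa eby.
have abM := subsetP Mdf_sub _ abD.
have [M2 [mx2 ux2 uy2 H]] := reach2 xX yY.
have abM2 := H _ abM (df_notX xX abD) (df_notY yY abD).
exact: (path3 mx2 ux2 uy2 (XYne xX yY) abM2 (m_neq mM abM) exa eby).
Qed.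

Lemma df_path5 x y a b c d : x \in X1 -> y \in Y1 -> [set a; b] \in Mdf ->
  [set c; d] \in Mdf -> [set a; b] != [set c; d] ->
  e x a -> e b d -> e c y -> False.
Proof.
move=> xX yY abD cdD ne exa ebd ecy.
have abM := subsetP Mdf_sub _ abD; have cdM := subsetP Mdf_sub _ cdD.
have [M2 [mx2 ux2 uy2 H]] := reach2 xX yY.
have abM2 := H _ abM (df_notX xX abD) (df_notY yY abD).
have cdM2 := H _ cdM (df_notX xX cdD) (df_notY yY cdD).
exact: (path5 mx2 ux2 uy2 (XYne xX yY) abM2 cdM2 ne (m_neq mM abM) (m_neq mM cdM) exa ebd ecy).
Qed.


Definition hasX z := [exists x in X1, e z x].
Definition hasY z := [exists y in Y1, e z y].

Lemma dfnb z : z \in cover Mdf -> hasX z || hasY z.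
Proof.
move=> zD; apply: contraT; rewrite negb_or => /andP [nX nY].
have zC : z \in cover M := cover_sub Mdf_sub zD.
have noX x : x \in X1 -> ~~ e z x.
  by move=> xX; apply: contra nX => ezx; apply/existsP; exists x; rewrite xX.
have noY y : y \in Y1 -> ~~ e z y.
  by move=> yY; apply: contra nY => ezy; apply/existsP; exists y; rewrite yY.
exfalso; apply: (HL (neq_unm zC uu) (neq_unm zC uv) (noX _ uX1) (noY _ vY1)).
apply: lowdeg.
- apply/subsetP => y; rewrite inE => ezy; apply: contraT => uy.
  by case/orP: (onlyUV uy) => /eqP ey; [move: (noX _ uX1) | move: (noY _ vY1)];
    rewrite -ey ezy.
- move=> c d cdM cd euc eud; apply: noX; rewrite /X1 in_setU1; apply/orP; right.
  by apply: (in_cover (_ : [set c; d] \in Msu)); rewrite ?inE ?eqxx // cdM su2 euc eud.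
- move=> c d cdM cd evc evd; apply: noY; rewrite /Y1 in_setU1; apply/orP; right.
  by apply: (in_cover (_ : [set c; d] \in Msv)); rewrite ?inE ?eqxx // cdM sv2 evc evd.
- move=> c d cdM cd euc evc; exfalso; move: (noSh cdM); rewrite sh2 euc evc.
  by [].
Qed.

Lemma dfside z z' : [set z; z'] \in Mdf -> hasX z -> ~~ hasY z'.
Proof.
move=> zD /existsP [x /andP [xX ezx]]; apply/negP => /existsP [y /andP [yY ezy]].
by apply: (df_path3 xX yY zD _ ezy); rewrite esy.
Qed.

Lemma partner z : z \in cover Mdf -> exists z', [set z; z'] \in Mdf /\ z != z'.
Proof. by move=> /(edge_of mM Mdf_sub) [z' [H1 H2 _]]; exists z'. Qed.

Lemma dfXY z : z \in cover Mdf -> hasX z -> ~~ hasY z.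
Proof.
move=> zD hx; have [z' [zD' zz']] := partner zD.
have z'D : [set z'; z] \in Mdf by rewrite setUC.
have z'C : z' \in cover Mdf by apply: (in_cover zD'); rewrite !inE eqxx orbT.
case/orP: (dfnb z'C) => h; first exact: dfside z'D h.
by move: (dfside zD' hx); rewrite h.
Qed.

Definition XD := [set z in cover Mdf | hasX z].
Definition Aset := X1 :|: XD.

Lemma dfpair z z' : [set z; z'] \in Mdf -> (z \in XD) = (z' \in XD).
Proof.
have gen a b : [set a; b] \in Mdf -> a \in XD -> b \in XD.
  move=> abD; rewrite !inE => /andP [aD hx].
  have bC : b \in cover Mdf by apply: (in_cover abD); rewrite !inE eqxx orbT.
  rewrite bC /=; case/orP: (dfnb bC) => // hy.
  by move: (dfside abD hx); rewrite hy.
move=> zD; apply/idP/idP; first exact: gen.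
by apply: gen; rewrite setUC.
Qed.

Lemma classify t : [\/ t = u, t = v, t \in cover Msu | (t \in cover Msv) || (t \in cover Mdf)].
Proof.
case tC: (t \in cover M); last first.
  by case/orP: (onlyUV (negbT tC)) => /eqP ->; [constructor 1 | constructor 2].
case/bigcupP: tC => E HE tE.
case suE: (su E); first by constructor 3; apply: (in_cover _ tE); rewrite inE HE suE.
constructor 4; case svE: (sv E); first by rewrite (in_cover _ tE) // inE HE svE.
by rewrite orbC (in_cover _ tE) // inE HE suE svE (negbTE (noSh HE)).
Qed.


Lemma X1A x : x \in X1 -> x \in Aset.
Proof. by rewrite /Aset in_setU => ->. Qed.

Lemma Y1nA y : y \in Y1 -> y \notin Aset.
Proof.
move=> yY; rewrite /Aset in_setU negb_or; apply/andP; split.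
  by apply/negP => yX; apply: (X1Y1 yX yY).
rewrite inE negb_and; apply/orP; left; apply/negP => /bigcupP [E HE yE].
by move: (df_notY yY HE); rewrite yE.
Qed.

Lemma MsuX1 x : x \in cover Msu -> x \in X1.
Proof. by rewrite /X1 in_setU1 => ->; rewrite orbT. Qed.
Lemma MsvY1 x : x \in cover Msv -> x \in Y1.
Proof. by rewrite /Y1 in_setU1 => ->; rewrite orbT. Qed.

Lemma no_cross x y : x \in Aset -> y \notin Aset -> e x y -> False.
Proof.
move=> xA yA exy.
have yc : (y \in Y1) || ((y \in cover Mdf) && ~~ hasX y).
  case: (classify y) => [ey|ey|yC|/orP [yC|yC]].
  - by move: yA; rewrite ey (X1A uX1).
  - by rewrite ey vY1.
  - by move: yA; rewrite (X1A (MsuX1 yC)).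
  - by rewrite (MsvY1 yC).
  - have : y \notin XD by move: yA; rewrite /Aset in_setU negb_or => /andP [].
    by rewrite inE yC /= => hy; rewrite hy orbT.
have [xX|[xD hx]] : x \in X1 \/ (x \in cover Mdf /\ hasX x).
  by move: xA; rewrite /Aset in_setU => /orP [->|]; [left|rewrite inE => /andP []; right].
  case/orP: yc => [yY|/andP [yD hy]]; first by move: (XY_noedge xX yY); rewrite exy.
  by move: hy; apply/negP/negPn/existsP; exists x; rewrite xX esy exy.
case/orP: yc => [yY|/andP [yD hy]].
  by move: (dfXY xD hx); apply/negP/negPn/existsP; exists y; rewrite yY exy.
have [x' [xD' xx']] := partner xD.
have [y' [yD' yy']] := partner yD.
have x'XD : x' \in XD by rewrite -(dfpair xD') inE xD hx.
have y'nXD : y' \notin XD by rewrite -(dfpair yD') inE yD (negbTE hy).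
move: x'XD; rewrite inE => /andP [_ /existsP [x'' /andP [x''X ex'x'']]].
have y'C : y' \in cover Mdf by apply: (in_cover yD'); rewrite !inE eqxx orbT.
have : hasY y'.
  case/orP: (dfnb y'C) => // h; by move: y'nXD; rewrite inE y'C h.
move=> /existsP [y'' /andP [y''Y ey'y'']].
have xD2 : [set x'; x] \in Mdf by rewrite setUC.
have yD2 : [set y'; y] \in Mdf by rewrite setUC.
have ne : [set x'; x] != [set y'; y].
  apply/eqP => eq; have : y \in [set x'; x] by rewrite eq !inE eqxx orbT.
  rewrite !inE => /orP [] /eqP ey; last by move: exy; rewrite ey eirr.
  by move: hy; rewrite ey; apply/negP/negPn/existsP; exists x''; rewrite x''X ex'x''.
by apply: (df_path5 x''X y''Y xD2 yD2 ne _ exy ey'y''); rewrite esy.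
Qed.

Lemma closedA x y : e x y -> (x \in Aset) = (y \in Aset).
Proof.
move=> exy; apply/idP/idP => h; apply: contraT => h'.
  by case: (no_cross h h' exy).
by case: (no_cross h h' (_ : e y x)); rewrite esy.
Qed.

Lemma connX x : x \in X1 -> connect e u x.
Proof.
rewrite /X1 in_setU1 => /orP [/eqP ->|xC]; first exact: connect0.
have [y [xyM _ _]] := edge_of mM Msu_sub xC.
by move: xyM; rewrite inE su2 => /andP [_ /andP [eux _]]; apply: connect1.
Qed.

Lemma connY y : y \in Y1 -> connect e v y.
Proof.
rewrite /Y1 in_setU1 => /orP [/eqP ->|yC]; first exact: connect0.
have [x [xyM _ _]] := edge_of mM Msv_sub yC.
by move: xyM; rewrite inE sv2 => /andP [_ /andP [evy _]]; apply: connect1.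
Qed.

Lemma connA t : t \in Aset -> connect e u t.
Proof.
rewrite /Aset in_setU => /orP [tX|]; first exact: connX.
rewrite inE => /andP [_ /existsP [x /andP [xX etx]]].
by apply: connect_trans (connX xX) (connect1 _); rewrite esy.
Qed.

Lemma connB t : t \notin Aset -> connect e v t.
Proof.
move=> tA; case: (classify t) => [et|et|tC|/orP [tC|tC]].
- by move: tA; rewrite et (X1A uX1).
- by rewrite et; apply: connect0.
- by move: tA; rewrite (X1A (MsuX1 tC)).
- exact: connY (MsvY1 tC).
- have nh : ~~ hasX t.
    have : t \notin XD by move: tA; rewrite /Aset in_setU negb_or => /andP [].
    by rewrite inE tC.
  case/orP: (dfnb tC) => h; first by move: nh; rewrite h.
  case/existsP: h => y /andP [yY ety].
  by apply: connect_trans (connY yY) (connect1 _); rewrite esy.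
Qed.

Lemma oddA : odd #|Aset|.
Proof.
have eD : Aset :\: cover M = [set u].
  apply/setP => t; rewrite in_setD in_set1; apply/andP/eqP => [[tC tA]|->].
    case/orP: (onlyUV tC) => /eqP // et.
    by move: tA; rewrite et (negbTE (Y1nA vY1)).
  by split; [exact: uu | exact: X1A uX1].
rewrite -(cardsID (cover M) Aset) eD cards1 addn1 /= sum_cover //.
apply: (big_ind (fun n : nat => ~~ odd n)) => //.
  by move=> a b ha hb; rewrite oddD (negbTE ha) (negbTE hb).
move=> E HE; have [a [b [-> ab eab _ _]]] := edgeM HE.
by rewrite card2I // (closedA eab) addnn odd_double.
Qed.

Lemma case2_struct : exists A : {set T}, [/\ u \in A, v \notin A,
  (forall x y, e x y -> (x \in A) = (y \in A)),
  (forall t, t \in A -> connect e u t) & (forall t, t \notin A -> connect e v t)]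
  /\ odd #|A|.
Proof.
exists Aset; split; last exact: oddA.
split; [exact: X1A uX1 | exact: Y1nA vY1 | exact: closedA | exact: connA | exact: connB].
Qed.

End Case2.

End Pair.


End Comb.

Import Order.TTheory GRing.Theory Num.Theory.
Local Open Scope ring_scope.

Lemma comp_lemma (T : finType) (e : rel T) (esy : symmetric e) (A : {set T}) u v :
  u \in A -> v \notin A -> (forall x y, e x y -> (x \in A) = (y \in A)) ->
  (forall t, t \in A -> connect e u t) -> (forall t, t \notin A -> connect e v t) ->
  components e = [set A; ~: A].
Proof.
move=> uA vA cl cA cB.
have csym := sym_connect_sym esy.
have comp x : [set y | connect e x y] = if x \in A then A else ~: A.
  apply/setP => y; rewrite inE.
  have cc : connect e x y -> (x \in A) = (y \in A) by apply: closed_connect.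
  case xA: (x \in A).
    apply/idP/idP => [/cc <- //| yA].
    by apply: connect_trans (cA _ yA); rewrite csym cA.
  rewrite inE; apply/idP/idP => [/cc <-|yA]; first by rewrite xA.
  by apply: connect_trans (cB _ yA); rewrite csym cB // xA.
apply/setP => C; rewrite /components !inE; apply/imsetP/orP.
  by case=> x _ ->; rewrite comp; case: (x \in A); [left|right].
case=> /eqP ->; [exists u => //; rewrite comp uA | exists v => //; rewrite comp (negbTE vA)].
by []. by [].
Qed.

Lemma deg_le (T : finType) (e : rel T) (eirr : irreflexive e) (C : {set T}) x y :
  (forall x y, e x y -> (x \in C) = (y \in C)) -> x \in C -> y \in C -> x != y ->
  ~~ e x y -> (deg e x + 2 <= #|C|)%N.
Proof.
move=> cl xC yC xy nxy.
rewrite (cardsD1 x C) xC (cardsD1 y (C :\ x)) !inE eq_sym xy yC add1n addSn addnC.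
rewrite ltnS ltnS /deg; apply: subset_leq_card; apply/subsetP => z; rewrite !inE => exz.
rewrite -(cl _ _ exz) xC andbT; apply/andP; split.
  by apply: contraNneq nxy => <-.
by apply: contraTneq exz => ->; rewrite eirr.
Qed.

Lemma clique_lemma (R : realType) (T : finType) (e : rel T) (esy : symmetric e)
  (eirr : irreflexive e) (C : {set T}) (s : R) :
  (forall x y, e x y -> (x \in C) = (y \in C)) -> sigma_ge e s ->
  2 * (#|C|%:R : R) <= s -> is_clique e C.
Proof.
move=> cl hs hC x y xC yC xy; apply: contraT => nxy.
have h1 := deg_le eirr cl xC yC xy nxy.
have yx : y != x by rewrite eq_sym.
have nyx : ~~ e y x by rewrite esy.
have h2 := deg_le eirr cl yC xC yx nyx.
have h3 := hs x y xy nxy.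
have : (deg e x + deg e y + 4 <= 2 * #|C|)%N by lia.
rewrite -(ler_nat R) !natrD => h4.
rewrite natrD in h3.
lra.
Qed.

Lemma half_le (R : realType) (c N g : R) : c <= (1 - g) / 2 * N -> 2 * c <= N - g * N.
Proof. move=> h; lra. Qed.

Lemma odd_compl (a b n : nat) : (a + b)%N = n -> ~~ odd n -> odd a -> odd b.
Proof. by move=> <-; rewrite oddD; case: (odd a); case: (odd b). Qed.

Lemma lin1 (R : realType) (g N du dv D m k : R) : N - g * N <= du + dv ->
  du + dv + D <= m * 2 -> k + m * 2 = N -> 2 <= k -> D <= g * N - 2.
Proof. move=> *; lra. Qed.

Lemma half_S (R : realType) (N S : R) : N <= 2 * S -> N / 2 <= S.
Proof. move=> *; lra. Qed.

Lemma case1_arith (R : realType) (g : R) (p d n : nat) : 0 < g -> g <= 1 / 100 ->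
  2 * (p%:R : R) <= 3 * g * n%:R -> (d%:R : R) <= g * n%:R - 2 ->
  ((2 * p * (2 * p + d + 2) + d * n)%N%:R : R) <= 2 * g * (n ^ 2)%N%:R.
Proof.
move=> g0 g1 hP hD.
rewrite natrX natrD !natrM !natrD expr2.
have P0 : 0 <= (p%:R : R) by [].
have D0 : 0 <= (d%:R : R) by [].
have N0 : 0 <= (n%:R : R) by [].
have t1 : 2%:R * p%:R * (2%:R * p%:R + d%:R + 2%:R) <=
          (3 * g * n%:R) * (3 * g * n%:R + g * n%:R + 2) :> R.
  apply: ler_pM; [nra | nra | lra | lra].
have t2 : d%:R * n%:R <= (g * n%:R - 2) * n%:R :> R by apply: ler_wpM2r.
have t3 : g * g * (n%:R * n%:R) <= 1 / 100 * g * (n%:R * n%:R) :> R.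
  rewrite -mulrA -[X in _ <= X]mulrA; apply: ler_wpM2r; first by nra.
  lra.
have t4 : g * n%:R <= n%:R :> R by nra.
nra.
Qed.

Theorem proposition2p9 (R : realType) :
  exists gamma0 : R, 0 < gamma0 /\
  forall gamma : R, 0 < gamma -> gamma <= gamma0 ->
  exists n0 : nat,
  forall (T : finType) (e : rel T),
    simple_graph e ->
    ~~ odd #|T| -> (n0 <= #|T|)%N ->
    sigma_ge e (#|T|%:R - gamma * #|T|%:R) ->
    has_perfect_matching e
    \/ (exists S : {set T}, gamma_independent e (2 * gamma : R) S /\
          (#|T|%:R / 2 : R) <= #|S|%:R)
    \/ (exists C1 C2 : {set T},
          [/\ C1 != C2, components e = [set C1; C2],
              odd #|C1|, odd #|C2| &
              forall C, C \in [set C1; C2] ->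
                (#|C|%:R : R) <= (1 - gamma) / 2 * #|T|%:R -> is_clique e C]).
Proof.
exists (1 / 100); split; first lra.
move=> g g0 g1; exists 0%N => T e [esy eirr] evn _ hsig.
have [M mx] := maxM_exists e.
have mM := proj1 mx.
case: (boolP (cover M == [set: T])) => [/eqP cov|ncov].
  left; exists M; split; last by split; [exact: m_triv mM | exact: cov].
  by move=> E HE; apply: m_edge mM HE.
right.
have [u uu] : exists u, unm M u.
  apply/existsP; apply: contraR ncov => /existsPn H.
  by apply/eqP/setP => x; rewrite inE; move: (H x); rewrite /unm negbK.
set n := #|T|.
have cardU : (#|~: cover M| + #|M| * 2)%N = n.
  by rewrite -(m_cover_card mM) addnC cardsC.
have [v [uv nuv]] : exists v, unm M v /\ u != v.
  have : (0 < #|~: cover M :\ u|)%N.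
    move: cardU; rewrite (cardsD1 u) inE (uu : u \notin cover M) /=.
    by move: evn; rewrite -/n; lia.
  case/card_gt0P => v; rewrite !inE => /andP [vu vC].
  by exists v; split => //; rewrite eq_sym.
have k2 : (2 <= #|~: cover M|)%N.
  move: cardU; rewrite (cardsD1 u) inE (uu : u \notin cover M) (cardsD1 v (_ :\ u)).
  rewrite !inE eq_sym nuv (uv : v \notin cover M) /=; lia.
have nuv' : ~~ e u v.
  by apply/negP => h; apply: (add_contra mx uu uv nuv h).
have sUV := hsig u v nuv nuv'.
have d1 := D1 esy eirr mx uu uv nuv.
have d2 := D2 esy mx uu uv nuv.
set p := cnt_p e M u v in d1 d2 *.
set s := cnt_s e M u v in d1 d2 *.
set d := cnt_d e M u v in d1 d2 *.
set m := #|M| in cardU d1 d2 *.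
set k := #|~: cover M| in cardU k2 *.
set du := deg e u in d1 sUV *.
set dv := deg e v in d1 sUV *.
have rU : (k%:R + m%:R * 2 = n%:R :> R) by rewrite -cardU natrD natrM.
have rd1 : (du%:R + dv%:R + d%:R <= m%:R * 2 :> R) by rewrite -natrD -natrD -natrM ler_nat.
have rd2 : (s%:R + p%:R + d%:R <= m%:R :> R) by rewrite -natrD -natrD ler_nat.
have rk2 : (2 <= k%:R :> R) by rewrite (ler_nat R 2 k).
rewrite natrD in sUV.
have g0' : 0 <= g by lra.
case: (ltrP (3 * g * n%:R) (2 * p%:R)) => hcase.
  right.
  have HL : forall z, z != u -> z != v -> ~~ e z u -> ~~ e z v ->
      (deg e z <= s + 2 * d)%N -> False.
    move=> z zu zv nzu nzv hz.
    have h1 := hsig z u zu nzu; have h2 := hsig z v zv nzv.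
    rewrite natrD -/du in h1; rewrite natrD -/dv in h2.
    have : ((deg e z)%:R <= s%:R + 2 * d%:R :> R).
      by move: hz; rewrite -(ler_nat R) natrD natrM.
    lra.
  have [A [[uA vA cl cA cB] oA]] := case2_struct esy eirr mx uu uv nuv HL.
  exists A, (~: A); split.
  - by apply/eqP => h; move: (uA); rewrite {1}h inE uA.
  - by have := comp_lemma esy uA vA cl cA cB; apply.
  - exact: oA.
  - exact: odd_compl (cardsC A) evn oA.
  - move=> C; rewrite !inE => /orP [] /eqP -> hC.
      by apply: (clique_lemma esy eirr cl hsig); apply: half_le.
    apply: (clique_lemma esy eirr (_ : forall x y, e x y -> (x \in ~: A) = (y \in ~: A)) hsig).
      by move=> x y exy; rewrite !inE (cl _ _ exy).
    exact: half_le.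
left.
have [S [hS hE]] := case1 esy eirr mx uu uv nuv.
exists S; split; last first.
  by apply: half_S; move: hS; rewrite -(ler_nat R) natrM.
rewrite /gamma_independent.
have := case1_arith g0 g1 hcase (lin1 sUV rd1 rU rk2).
by apply: le_trans; rewrite ler_nat.
Qed.
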